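(* Let $D$ be an arc-colored digraph of order $4$. If $a(D)+c(D)=18$ and $D$ contains no rainbow triangle, then $D\cong\overleftrightarrow{K}_{4}$.
   Context: Digraphs are finite, without loops or multiple arcs (opposite arcs allowed); $\overleftrightarrow{K}_{4}$ is the complete digraph on 4 vertices (12 arcs). $a(D)$ is the number of arcs, $c(D)$ the number of distinct colors under an arc-coloring $C:A(D)\to\mathbb{N}$. A rainbow triangle is a directed 3-cycle with pairwise distinct arc colors. *)

(* Defs.v *)
From mathcomp Require Import all_boot.
Set Implicit Arguments. Unset Strict Implicit. Unset Printing Implicit Defensive.

(* A digraph on a finite vertex type V is a loopless arc relation A : rel V
   (opposite arcs allowed, no multiple arcs since A is a relation). *)
Definition loopless (V : finType) (A : rel V) : Prop := forall v, ~~ A v v.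

Definition arcs (V : finType) (A : rel V) : {set V * V} :=
  [set p | A p.1 p.2].

Definition num_arcs (V : finType) (A : rel V) : nat := #|arcs A|.

(* c(D) : number of distinct colors used on arcs; an arc-coloring is
   C : V -> V -> nat, whose values on non-arcs are irrelevant. *)
Definition num_colors (V : finType) (A : rel V) (C : V -> V -> nat) : nat :=
  size (undup [seq C p.1 p.2 | p <- enum (arcs A)]).

Definition has_rainbow_triangle (V : finType) (A : rel V) (C : V -> V -> nat)
  : Prop :=
  exists x y z : V,
    [/\ A x y, A y z, A z x,
        [/\ x != y, y != z & z != x] &
        [/\ C x y != C y z, C y z != C z x & C z x != C x y]].

Definition K4_arcs : rel 'I_4 := fun u v => u != v.

Definition digraph_iso (V W : finType) (A : rel V) (B : rel W) : Prop :=
  exists f : V -> W, bijective f /\ forall u v, A u v = B (f u) (f v).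

(* Main.v *)
Require Import Defs.
From mathcomp Require Import all_boot.
From mathcomp Require Import zify.


Definition tris : seq (nat * nat * nat) :=
  [:: (0,6,3); (2,7,1); (0,8,5); (4,9,1); (2,10,5); (4,11,3); (6,10,9); (8,11,7)].

Definition present (m : nat -> bool) (t : nat * nat * nat) :=
  [&& m t.1.1, m t.1.2 & m t.2].

Definition tcands (t : nat * nat * nat) : seq (nat * nat) :=
  [:: (t.1.1, t.1.2); (t.1.2, t.2); (t.2, t.1.1)].

Definition cands (m : nat -> bool) := [seq tcands t | t <- tris & present m t].

Definition combos (ls : seq (seq (nat * nat))) : seq (seq (nat * nat)) :=
  foldr (fun cs acc => [seq p :: r | p <- cs, r <- acc]) [:: [::]] ls.

Definition merge (f : nat -> nat) (p : nat * nat) : nat -> nat :=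
  fun k => if f k == f p.2 then f p.1 else f k.

Definition repOf (r : seq (nat * nat)) : nat -> nat := foldl merge id r.

Definition Sm (m : nat -> bool) := [seq i <- iota 0 12 | m i].

Definition check (m : nat -> bool) :=
  (size (Sm m) <= 8) ||
  all (fun r => size (Sm m) + size (undup (map (repOf r) (Sm m))) < 18) (combos (cands m)).

Fixpoint allbools n : seq (seq bool) :=
  if n is n'.+1 then [seq b :: s | b <- [:: true; false], s <- allbools n'] else [:: [::]].

Definition fullcheck := all (fun s => check (nth false (false :: s))) (allbools 11).

Lemma fullcheck_ok : fullcheck.
Proof. vm_compute. reflexivity. Qed.

Lemma allbools_mem n s : size s = n -> s \in allbools n.
Proof.
elim: n s => [|n IH] [|b s] //= [Hs].
by case: b; rewrite /= ?mem_cat (map_f _ (IH _ Hs)) ?orbT.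
Qed.

Lemma combos_sound (P : pred (nat * nat)) ls :
  (forall cs, cs \in ls -> has P cs) -> exists2 r, r \in combos ls & all P r.
Proof.
elim: ls => [|cs ls IH] H; first by exists [::].
have [p pin Pp] : exists2 p, p \in cs & P p by apply/hasP; apply: H; rewrite inE eqxx.
have [|r rin Pr] := IH; first by move=> cs' h; apply: H; rewrite inE h orbT.
exists (p :: r); last by rewrite /= Pp.
exact: (allpairs_f (fun p r => p :: r) pin rin).
Qed.

Lemma rep_ok (c : nat -> nat) r : all (fun p => c p.1 == c p.2) r ->
  forall k, c (repOf r k) = c k.
Proof.
rewrite /repOf => Hr.
suff : forall f, (forall k, c (f k) = c k) -> forall k, c (foldl merge f r k) = c k.
  by apply.
elim: r Hr => [|p r IH] //= /andP [/eqP Hp Hr] f Hf.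
apply: IH => // k; rewrite /merge.
case: eqP => [E|_]; last exact: Hf.
by rewrite Hf Hp -(Hf p.2) -E Hf.
Qed.

Lemma undup_map_le (T1 T2 : eqType) (g : T1 -> T2) s :
  size (undup (map g s)) <= size (undup s).
Proof.
rewrite -(size_map g (undup s)); apply: uniq_leq_size; first exact: undup_uniq.
move=> x; rewrite mem_undup => /mapP [y ys ->].
by apply: map_f; rewrite mem_undup.
Qed.

Lemma sound (m : nat -> bool) (c : nat -> nat) :
  check m ->
  (forall t, t \in tris -> present m t -> c t.1.1 = c t.1.2 \/ c t.1.2 = c t.2 \/ c t.2 = c t.1.1) ->
  size (Sm m) + size (undup (map c (Sm m))) = 18 -> False.
Proof.
move=> /orP [small|/allP chk] Ht E.
  have := leq_trans (size_undup _) (eq_leq (size_map c (Sm m))).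
  lia.
have [cs csin|r rin Pr] := @combos_sound (fun p => c p.1 == c p.2) (cands m); last first.
  have := chk r rin.
  have Hmap : map c (Sm m) = map c (map (repOf r) (Sm m)).
    by rewrite -map_comp; apply: eq_map => k /=; rewrite rep_ok.
  have := undup_map_le _ _ c (map (repOf r) (Sm m)).
  rewrite -Hmap; lia.
move: csin => /mapP [t]; rewrite mem_filter => /andP [pt tin] ->.
have := Ht t tin pt; rewrite /tcands /=.
by case=> [->|[->|->]]; rewrite eqxx ?orbT.
Qed.

Lemma filt_idx (L : seq (bool * nat)) :
  map snd (filter fst L) =
  map (nth 0 (map snd L)) [seq i <- iota 0 (size L) | nth false (map fst L) i].
Proof.
elim: L => //= [[b x] L IH] /=.
rewrite -[1]/(1 + 0) iotaDl filter_map.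
case: b => /=; [congr (_ :: _)|];
rewrite (@eq_filter _ _ (nth false (map fst L))) // IH -map_comp; exact: eq_map.
Qed.

Lemma core_refl (L : seq (bool * nat)) :
  size L = 12 -> nth false (map fst L) 0 = false ->
  (forall t, t \in tris -> present (nth false (map fst L)) t ->
     nth 0 (map snd L) t.1.1 = nth 0 (map snd L) t.1.2 \/
     nth 0 (map snd L) t.1.2 = nth 0 (map snd L) t.2 \/
     nth 0 (map snd L) t.2 = nth 0 (map snd L) t.1.1) ->
  count fst L + size (undup (map snd (filter fst L))) = 18 -> False.
Proof.
move=> sL h0 Ht.
have chk : check (nth false (map fst L)).
  have := size_map fst L; rewrite sL.
  case E: (map fst L) h0 => [|b0 s] //= -> [Hs].
  exact: (allP fullcheck_ok s (allbools_mem _ _ Hs)).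
rewrite -size_filter -(size_map snd) filt_idx size_map sL.
exact: (sound _ _ chk Ht).
Qed.

Lemma mapfilter (T : Type) (a : pred T) (f : T -> nat) s :
  map f (filter a s) = map snd (filter fst (map (fun p => (a p, f p)) s)).
Proof. by elim: s => //= x s IH; case: (a x) => /=; rewrite IH. Qed.

Lemma countmap (T : Type) (a : pred T) (f : T -> nat) s :
  count a s = count fst (map (fun p => (a p, f p)) s).
Proof. by rewrite count_map. Qed.

Theorem lemma4 (V : finType) (A : rel V) (C : V -> V -> nat) :
  #|V| = 4 -> loopless A ->
  num_arcs A + num_colors A C = 18 ->
  ~ has_rainbow_triangle A C ->
  digraph_iso A K4_arcs.
Proof.
move=> cardV loopA H18 norb.
have tri : forall x y z, x != y -> y != z -> z != x -> A x y -> A y z -> A z x ->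
   C x y = C y z \/ C y z = C z x \/ C z x = C x y.
  move=> x y z nxy nyz nzx axy ayz azx.
  case: (eqVneq (C x y) (C y z)) => [->|e1]; first by left.
  case: (eqVneq (C y z) (C z x)) => [->|e2]; first by right; left.
  case: (eqVneq (C z x) (C x y)) => [->|e3]; first by right; right.
  by exfalso; apply: norb; exists x, y, z; split.
case: (boolP [forall u, forall v, (u != v) ==> A u v]) => [/forallP full|].
  pose f := fun w => cast_ord cardV (enum_rank w).
  have fK : cancel f (fun i => enum_val (cast_ord (esym cardV) i)).
    by move=> w; rewrite /f cast_ordK enum_rankK.
  exists f; split.
    exists (fun i => enum_val (cast_ord (esym cardV) i)) => // i.
    by rewrite /f enum_valK cast_ordKV.
  move=> u v; rewrite /K4_arcs (inj_eq (can_inj fK)).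
  case: (eqVneq u v) => [->|nuv]; first exact/negbTE/loopA.
  by have /forallP/(_ v) := full u; rewrite nuv.
rewrite negb_forall => /existsP [u]; rewrite negb_forall => /existsP [v].
rewrite negb_imply => /andP [nuv nA].
have : #|[set w | (w != u) && (w != v)]| == 2.
  have -> : [set w | (w != u) && (w != v)] = ~: [set u; v].
    by apply/setP => w; rewrite !inE negb_or.
  by have := cardsC [set u; v]; rewrite cards2 nuv cardV => /(congr1 (subn^~ 2)); rewrite addKn => ->.
case/cards2P => x [y [nxy Sxy]].
have : x \in [set w | (w != u) && (w != v)] by rewrite Sxy !inE eqxx.
have : y \in [set w | (w != u) && (w != v)] by rewrite Sxy !inE eqxx orbT.
rewrite !inE => /andP [nyu nyv] /andP [nxu nxv].
have cover : forall w, [|| w == u, w == v, w == x | w == y].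
  move=> w; case: (eqVneq w u) => //= nwu; case: (eqVneq w v) => //= nwv.
  have : w \in [set w | (w != u) && (w != v)] by rewrite !inE nwu nwv.
  by rewrite Sxy !inE.
have nvu := nuv; rewrite eq_sym in nvu.
have nux := nxu; rewrite eq_sym in nux.
have nvx := nxv; rewrite eq_sym in nvx.
have nuy := nyu; rewrite eq_sym in nuy.
have nvy := nyv; rewrite eq_sym in nvy.
have nyx := nxy; rewrite eq_sym in nyx.
pose P := [:: (u,v); (v,u); (u,x); (x,u); (u,y); (y,u); (v,x); (x,v); (v,y); (y,v); (x,y); (y,x)].
pose a := fun p : V * V => A p.1 p.2.
pose col := fun p : V * V => C p.1 p.2.
have pe : perm_eq (enum (arcs A)) (filter a P).
  apply: uniq_perm; first exact: enum_uniq.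
    rewrite filter_uniq //= !inE !xpair_eqE !eqxx /=.
    rewrite (negbTE nuv) (negbTE nvu) (negbTE nux) (negbTE nxu) (negbTE nuy) (negbTE nyu).
    by rewrite (negbTE nvx) (negbTE nxv) (negbTE nvy) (negbTE nyv) (negbTE nxy) (negbTE nyx).
  case=> p1 p2; rewrite mem_enum mem_filter !inE /a /=.
  case Ap: (A p1 p2) => //=.
  have np : p1 != p2 by apply: contraTneq Ap => ->; exact: loopA.
  move: np; case/or4P: (cover p1) => /eqP ->; case/or4P: (cover p2) => /eqP -> ;
    rewrite ?eqxx // => _; rewrite !xpair_eqE !eqxx ?orbT //.
exfalso.
apply: (core_refl (map (fun p => (a p, col p)) P)).
- by rewrite size_map.
- by rewrite /= /a /= (negbTE nA).
- move=> t; rewrite /tris.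
  rewrite !inE => Hm.
  repeat (case/orP: Hm => [/eqP -> | Hm];
    first by rewrite /present /= => /and3P [h1 h2 h3]; exact: tri).
  move/eqP: Hm => ->.
  by rewrite /present /= => /and3P [h1 h2 h3]; exact: tri.
rewrite -H18 /num_arcs /num_colors cardE (perm_size pe) size_filter.
rewrite (perm_size (perm_undup (perm_mem (perm_map col pe)))).
rewrite (countmap _ a col) (mapfilter _ a col).
done.
Qed.
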